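(* Let $(R,\mathfrak{m})$ be a Noetherian local ring and let $\varphi$ be a self-map of finite length of $R$. For $n\ge1$, $\varphi(\ker\varphi^n)\subseteq\ker\varphi^n$; let $\overline\varphi_n$ be the local self-map induced by $\varphi$ on $R/\ker\varphi^n$. Then: (a) $h_{\mathrm{alg}}(\varphi,R)=h_{\mathrm{alg}}(\overline\varphi_n,R/\ker\varphi^n)$ for every $n\ge1$; (b) for all sufficiently large $n$, $\overline\varphi_n$ is injective; (c) if $\varphi$ is integral (i.e. $R$ is integral over $\varphi(R)$), then $\overline\varphi_n$ is integral.
   Context: A self-map of finite length of a Noetherian local ring $(A,\mathfrak{n})$ is a ring endomorphism $\psi$ with $\psi(\mathfrak{n})\subseteq\mathfrak{n}$ and $\psi(\mathfrak{n})A$ $\mathfrak{n}$-primary. Put $\lambda(\psi^n):=\ell_A(A/\psi^n(\mathfrak{n})A)$; the algebraic entropy is $h_{\mathrm{alg}}(\psi,A):=\lim_{n\to\infty}\frac1n\log\lambda(\psi^n)$ (the limit exists). *)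

(* Defs.v *)
From HB Require Import structures.
From Stdlib Require Import Reals ClassicalEpsilon.
From mathcomp Require Import all_boot all_order all_algebra.
Set Implicit Arguments. Unset Strict Implicit. Unset Printing Implicit Defensive.
Import GRing.Theory.

Section Defs.
Variable A : comUnitRingType.
Local Open Scope ring_scope.

Definition is_ideal (I : A -> Prop) : Prop :=
  I 0 /\ (forall x y, I x -> I y -> I (x - y)) /\ (forall a x, I x -> I (a * x)).

Definition subset_of (I J : A -> Prop) : Prop := forall x, I x -> J x.

Definition gen_ideal (X : A -> Prop) : A -> Prop :=
  fun x => forall J, is_ideal J -> subset_of X J -> J x.

Definition is_maximal_ideal (M : A -> Prop) : Prop :=
  is_ideal M /\ ~ M 1 /\
  forall J, is_ideal J -> subset_of M J -> (subset_of J M \/ J 1).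

Definition is_local : Prop :=
  exists M, is_maximal_ideal M /\
    forall M', is_maximal_ideal M' -> (subset_of M M' /\ subset_of M' M).

Definition is_noetherian : Prop :=
  forall I : nat -> A -> Prop, (forall n, is_ideal (I n)) ->
    (forall n, subset_of (I n) (I n.+1)) ->
    exists N : nat, forall n : nat, (N <= n)%N -> subset_of (I n) (I N).

(* The maximal ideal of a local ring = the set of non-units. *)
Definition max_ideal : A -> Prop := fun x => ~ (x \is a GRing.unit).

Definition is_max_primary (Q : A -> Prop) : Prop :=
  is_ideal Q /\ ~ Q 1 /\
  (forall x y, Q (x * y) -> ~ Q x -> exists k, Q (y ^+ k)) /\
  (forall x, (exists k, Q (x ^+ k)) <-> max_ideal x).

Definition image_of (f : A -> A) (X : A -> Prop) : A -> Prop :=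
  fun y => exists x, X x /\ y = f x.

Definition finite_length_selfmap (psi : {rmorphism A -> A}) : Prop :=
  subset_of (image_of psi max_ideal) max_ideal /\
  is_max_primary (gen_ideal (image_of psi max_ideal)).

(* Strict chain of ideals I = J_0 < J_1 < ... < J_k = A; such chains
   correspond to strict chains of submodules 0 < ... < A/I of the A-module A/I. *)
Definition chain_of_length (I : A -> Prop) (k : nat) : Prop :=
  exists J : nat -> A -> Prop,
    (forall i, (i <= k)%N -> is_ideal (J i)) /\
    (forall x, J 0%N x <-> I x) /\
    (forall x, J k x) /\
    (forall i, (i < k)%N -> subset_of (J i) (J i.+1) /\ ~ subset_of (J i.+1) (J i)).

Definition length_is (I : A -> Prop) (n : nat) : Prop :=
  chain_of_length I n /\ forall k, chain_of_length I k -> (k <= n)%N.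

(* ell_A(A/I) (meaningful when finite) *)
Definition ell (I : A -> Prop) : nat :=
  epsilon (inhabits 0%N) (fun n => length_is I n).

Definition lambda_iter (psi : {rmorphism A -> A}) (n : nat) : nat :=
  ell (gen_ideal (image_of (iter n psi) max_ideal)).

Definition h_alg (psi : {rmorphism A -> A}) : R :=
  epsilon (inhabits R0)
    (fun h : R => Un_cv (fun k => Rdiv (ln (INR (lambda_iter psi k.+1))) (INR k.+1)) h).

Definition integral_selfmap (psi : {rmorphism A -> A}) : Prop :=
  forall x : A, exists q : {poly A}, q \is monic /\ root (map_poly psi q) x.

End Defs.

(* Main.v *)
Require Import Defs.
From Stdlib Require Import Reals.
From Stdlib Require Import Lra Lia.
Section RealPart.
Local Open Scope R_scope.

Lemma Un_cv_ext' (u v : nat -> R) l : (forall k, u k = v k) -> Un_cv u l -> Un_cv v l.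
Proof. intros E H eps He. destruct (H eps He) as [N HN]. exists N. intros k Hk. rewrite <- E. auto. Qed.

Lemma cv_inv_S : Un_cv (fun k => / INR (S k)) 0.
Proof.
apply (cv_infty_cv_0 (fun k => INR (S k))).
intro M. destruct (INR_unbounded M) as [N HN]. exists N. intros k Hk.
apply Rlt_le_trans with (INR N); [lra|]. apply le_INR. lia.
Qed.

Lemma Un_cv_squeeze (l u w : nat -> R) h : (forall k, l k <= u k) -> (forall k, u k <= w k) ->
  Un_cv l h -> Un_cv w h -> Un_cv u h.
Proof.
intros H1 H2 Hl Hw eps He.
destruct (Hl eps He) as [N1 HN1]. destruct (Hw eps He) as [N2 HN2].
exists (max N1 N2). intros k Hk.
assert (A1 := HN1 k ltac:(lia)). assert (A2 := HN2 k ltac:(lia)).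
unfold R_dist in *. apply Rabs_def2 in A1. apply Rabs_def2 in A2.
specialize (H1 k). specialize (H2 k).
apply Rabs_def1; lra.
Qed.

Lemma INR_S_pos k : 0 < INR (S k).
Proof. apply lt_0_INR. lia. Qed.

Lemma cv_shift_div (p : nat -> R) n h : Un_cv (fun k => p k * / INR (S k)) h ->
  Un_cv (fun k => p (k + n)%nat * / INR (S k)) h.
Proof.
intro H.
assert (H1 := CV_shift' _ n _ H). cbv beta in H1.
assert (H2 : Un_cv (fun k => 1 + INR n * / INR (S k)) (1 + INR n * 0)).
{ apply CV_plus. intros e He; exists 0%nat; intros; unfold R_dist; rewrite Rminus_diag, Rabs_R0; auto.
  apply CV_mult. intros e He; exists 0%nat; intros; unfold R_dist; rewrite Rminus_diag, Rabs_R0; auto.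
  apply cv_inv_S. }
assert (H3 := CV_mult _ _ _ _ H1 H2). rewrite Rmult_0_r, Rplus_0_r, Rmult_1_r in H3.
refine (Un_cv_ext' _ _ _ _ H3).
intro k. cbv beta. assert (P1 := INR_S_pos k). assert (P2 := INR_S_pos (k + n)).
replace (INR (S (k+n))) with (INR (S k) + INR n) in *
  by (rewrite <- plus_INR; f_equal).
field. lra.
Qed.

Lemma cv_unshift_div (p : nat -> R) n h : Un_cv (fun k => p (k + n)%nat * / INR (S k)) h ->
  Un_cv (fun k => p k * / INR (S k)) h.
Proof.
intro H. apply (CV_shift _ n).
assert (H2 : Un_cv (fun k => 1 - INR n * / INR (S (k + n))) (1 - INR n * 0)).
{ apply CV_minus. intros e He; exists 0%nat; intros; unfold R_dist; rewrite Rminus_diag, Rabs_R0; auto.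
  apply CV_mult. intros e He; exists 0%nat; intros; unfold R_dist; rewrite Rminus_diag, Rabs_R0; auto.
  apply (CV_shift' (fun k => / INR (S k)) n 0 cv_inv_S). }
assert (H3 := CV_mult _ _ _ _ H H2). rewrite Rmult_0_r, Rminus_0_r, Rmult_1_r in H3.
refine (Un_cv_ext' _ _ _ _ H3).
intro k. cbv beta. assert (P1 := INR_S_pos k). assert (P2 := INR_S_pos (k + n)).
replace (INR (S (k+n))) with (INR (S k) + INR n) in *
  by (rewrite <- plus_INR; f_equal).
field. lra.
Qed.

Lemma real_main (p q : nat -> R) (n : nat) (c : R) :
  (forall k, q k <= p k) -> (forall k, p (k + n)%nat <= c + q k) ->
  forall h, Un_cv (fun k => p k / INR (S k)) h <-> Un_cv (fun k => q k / INR (S k)) h.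
Proof.
intros Hqp Hpq h. unfold Rdiv. split; intro H.
- apply (Un_cv_squeeze (fun k => p (k + n)%nat * / INR (S k) - c * / INR (S k)) _
          (fun k => p k * / INR (S k))).
  + intro k. assert (P := INR_S_pos k). specialize (Hpq k).
    rewrite <- Rmult_minus_distr_r. apply Rmult_le_compat_r.
    left; apply Rinv_0_lt_compat; lra. lra.
  + intro k. assert (P := INR_S_pos k). apply Rmult_le_compat_r.
    left; apply Rinv_0_lt_compat; lra. auto.
  + replace h with (h - c * 0) by ring. apply CV_minus. apply cv_shift_div; auto.
    apply CV_mult. intros e He; exists 0%nat; intros; unfold R_dist; rewrite Rminus_diag, Rabs_R0; auto.
    apply cv_inv_S.
  + auto.
- apply (cv_unshift_div _ n).
  apply (Un_cv_squeeze (fun k => q (k + n)%nat * / INR (S k)) _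
          (fun k => c * / INR (S k) + q k * / INR (S k))).
  + intro k. assert (P := INR_S_pos k). apply Rmult_le_compat_r.
    left; apply Rinv_0_lt_compat; lra. auto.
  + intro k. assert (P := INR_S_pos k). specialize (Hpq k).
    rewrite <- Rmult_plus_distr_r. apply Rmult_le_compat_r.
    left; apply Rinv_0_lt_compat; lra. lra.
  + apply cv_shift_div; auto.
  + replace h with (c * 0 + h) by ring. apply CV_plus; auto.
    apply CV_mult. intros e He; exists 0%nat; intros; unfold R_dist; rewrite Rminus_diag, Rabs_R0; auto.
    apply cv_inv_S.
Qed.

Lemma ln_le' x y : 0 < x -> x <= y -> ln x <= ln y.
Proof. intros Hx [H|H]. left; apply ln_increasing; auto. subst; right; auto. Qed.

Lemma real_fin (a b : nat -> nat) n :
  (forall k, (1 <= b k)%nat) -> (forall k, (b k <= a k)%nat) ->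
  (forall k, (a (n + k) <= a n * b k)%nat) -> (1 <= a n)%nat ->
  forall h, Un_cv (fun k => Rdiv (ln (INR (a (S k)))) (INR (S k))) h <->
            Un_cv (fun k => Rdiv (ln (INR (b (S k)))) (INR (S k))) h.
Proof.
intros Hb Hba Hab Han.
apply (real_main (fun k => ln (INR (a (S k)))) (fun k => ln (INR (b (S k)))) n (ln (INR (a n)))).
- intro k. apply ln_le'. apply lt_0_INR. apply Hb. apply le_INR. apply Hba.
- intro k.
  assert (E : ln (INR (a n)) + ln (INR (b (S k))) = ln (INR (a n) * INR (b (S k)))).
  { symmetry; apply ln_mult; apply lt_0_INR; auto. }
  rewrite E, <- mult_INR. apply ln_le'. apply lt_0_INR. specialize (Hba (S (k + n))). specialize (Hb (S (k+n))). lia.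
  apply le_INR. replace (S (k + n)) with (n + S k)%nat by lia. apply Hab.
Qed.

End RealPart.
From HB Require Import structures.
From mathcomp Require Import all_boot all_order all_algebra.
From Stdlib Require Import Lra Lia ClassicalEpsilon Classical FunctionalExtensionality PropExtensionality.
From mathcomp Require Import ring zify.
Set Implicit Arguments. Unset Strict Implicit. Unset Printing Implicit Defensive.
Import GRing.Theory.

Section Ring.
Variable A : comUnitRingType.
Local Open Scope ring_scope.
Implicit Types (I J X : A -> Prop).

Lemma id0 I : is_ideal I -> I 0. Proof. by case. Qed.
Lemma idB I x y : is_ideal I -> I x -> I y -> I (x - y).
Proof. by case=> _ [H _]; apply: H. Qed.
Lemma idMl I a x : is_ideal I -> I x -> I (a * x).
Proof. by case=> _ [_ H]; apply: H. Qed.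
Lemma idMr I a x : is_ideal I -> I x -> I (x * a).
Proof. by move=> HI Hx; rewrite mulrC; apply: idMl. Qed.
Lemma idN I x : is_ideal I -> I x -> I (- x).
Proof. by move=> HI Hx; rewrite -sub0r; apply: idB => //; apply: id0. Qed.
Lemma idD I x y : is_ideal I -> I x -> I y -> I (x + y).
Proof. by move=> HI Hx Hy; rewrite -(opprK y); apply: idB => //; apply: idN. Qed.
Lemma id1 I x : is_ideal I -> I 1 -> I x.
Proof. by move=> HI H1; rewrite -(mulr1 x); apply: idMl. Qed.

Lemma gen_is_ideal X : is_ideal (gen_ideal X).
Proof.
split; first by move=> J HJ _; apply: id0.
split; first by move=> x y Hx Hy J HJ HX; apply: idB => //; [apply: Hx|apply: Hy].
by move=> a x Hx J HJ HX; apply: idMl => //; apply: Hx.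
Qed.
Lemma gen_sub X : subset_of X (gen_ideal X).
Proof. by move=> x Hx J HJ HX; apply: HX. Qed.
Lemma gen_min X J : is_ideal J -> subset_of X J -> subset_of (gen_ideal X) J.
Proof. by move=> HJ HX x Hx; apply: Hx. Qed.

Definition ext I g : A -> Prop := fun x => exists a, I (x - a * g).
Lemma ext_ideal I g : is_ideal I -> is_ideal (ext I g).
Proof.
move=> HI; split; first by exists 0; rewrite mul0r subr0; apply: id0.
split.
  move=> x y [a Ha] [b Hb]; exists (a - b).
  have -> : x - y - (a - b) * g = (x - a * g) - (y - b * g) by rewrite mulrBl; ring.
  by apply: idB.
move=> c x [a Ha]; exists (c * a).
have -> : c * x - c * a * g = c * (x - a * g) by ring.
by apply: idMl.
Qed.
Lemma ext_sub I g : is_ideal I -> subset_of I (ext I g).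
Proof. by move=> HI x Hx; exists 0; rewrite mul0r subr0. Qed.
Lemma ext_g I g : is_ideal I -> ext I g g.
Proof. by move=> HI; exists 1; rewrite mul1r subrr; apply: id0. Qed.
Lemma ext_mono I I' g : subset_of I I' -> subset_of (ext I g) (ext I' g).
Proof. by move=> H x [a Ha]; exists a; apply: H. Qed.
Lemma ext_min I J g : is_ideal J -> subset_of I J -> J g -> subset_of (ext I g) J.
Proof.
move=> HJ HIJ Hg x [a Ha].
have -> : x = (x - a * g) + a * g by ring.
by apply: idD => //; [apply: HIJ|apply: idMl].
Qed.

Definition step I g := forall a, @max_ideal A a -> I (a * g).

Fixpoint flag I (s : seq A) : Prop :=
  match s with [::] => I 1 | g :: s' => step I g /\ flag (ext I g) s' end.

Fixpoint steps I (s : seq A) : Prop :=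
  match s with [::] => True | g :: s' => step I g /\ steps (ext I g) s' end.
Fixpoint extS I (s : seq A) : A -> Prop :=
  match s with [::] => I | g :: s' => extS (ext I g) s' end.

Lemma flag_cat I s1 s2 : flag I (s1 ++ s2) <-> steps I s1 /\ flag (extS I s1) s2.
Proof.
elim: s1 I => [|g s1 IH] I /=; first by tauto.
by rewrite IH; tauto.
Qed.
Lemma flag_steps I s : flag I s <-> steps I s /\ extS I s 1.
Proof. by have := flag_cat I s [::]; rewrite cats0. Qed.

Lemma extS_ideal I s : is_ideal I -> is_ideal (extS I s).
Proof. by elim: s I => [|g s IH] I HI //=; apply/IH/ext_ideal. Qed.
Lemma extS_sub I s : is_ideal I -> subset_of I (extS I s).
Proof.
elim: s I => [|g s IH] I HI //= x Hx.
by apply: IH; [apply: ext_ideal|apply: ext_sub].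
Qed.
Lemma extS_mono I I' s : subset_of I I' -> subset_of (extS I s) (extS I' s).
Proof. by elim: s I I' => [|g s IH] I I' H //=; apply/IH/ext_mono. Qed.

Lemma flag_mono I I' s : subset_of I I' -> flag I s -> flag I' s.
Proof.
elim: s I I' => [|g s IH] I I' H /=; first by apply: H.
case=> Hs Hf; split; first by move=> a Ha; apply/H/Hs.
by apply: IH Hf; apply: ext_mono.
Qed.

Lemma flag_full I s : is_ideal I -> I 1 -> flag I s.
Proof.
elim: s I => [|g s IH] I HI H1 //=; split.
  by move=> a _; apply: id1.
by apply: IH; [apply: ext_ideal|apply: ext_sub].
Qed.


Definition bP (P : Prop) : nat := if excluded_middle_informative P then 1%N else 0%N.

Fixpoint nstrict (C : nat -> A -> Prop) (k : nat) : nat :=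
  match k with 0 => 0%N | k'.+1 => (nstrict C k' + bP (~ subset_of (C k'.+1) (C k')))%N end.

Lemma key_strict I g Ci Ci1 : is_ideal I -> step I g -> subset_of I Ci -> subset_of Ci Ci1 ->
  is_ideal Ci -> is_ideal Ci1 ->
  subset_of (ext Ci1 g) (ext Ci g) -> ~ subset_of Ci1 Ci -> Ci1 g /\ ~ Ci g.
Proof.
move=> HI Hs HICi HC HCi HCi1 Hext Hns.
have [y [Hy1 Hy2]] : exists y, Ci1 y /\ ~ Ci y.
  apply: NNPP => Hn; apply: Hns => x Hx; apply: NNPP => Hx'; apply: Hn; exists x; tauto.
have [a Ha] := Hext y (ext_sub g HCi1 Hy1).
case Hu: (a \is a GRing.unit).
  split.
    have -> : g = a^-1 * (y - (y - a * g)) by rewrite opprB addrC subrK mulKr.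
    by apply: idMl => //; apply: idB => //; apply: HC.
  move=> Hg; apply: Hy2; have -> : y = (y - a * g) + a * g by rewrite subrK.
  by apply: idD => //; apply: idMl.
exfalso; apply: Hy2; have -> : y = (y - a * g) + a * g by rewrite subrK.
apply: idD => //; apply: HICi; apply: Hs; rewrite /max_ideal Hu //.
Qed.

Lemma nstrict_full C k : (forall i, (i <= k)%N -> forall x, C i x) -> nstrict C k = 0%N.
Proof.
elim: k => [|k IH] H //=.
rewrite IH; last by move=> i Hi; apply: H; apply: leq_trans Hi _.
rewrite /bP; case: excluded_middle_informative => // Hn; exfalso; apply: Hn => x _.
by apply: H; apply: leqnSn.
Qed.

Lemma sub_chain I (C : nat -> A -> Prop) k : subset_of I (C 0%N) ->
  (forall i, (i < k)%N -> subset_of (C i) (C i.+1)) -> forall i, (i <= k)%N -> subset_of I (C i).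
Proof.
move=> H0 Hm; elim=> [|i IH] Hi; first exact: H0.
move=> x Hx; exact: (Hm i Hi x (IH (ltnW Hi) x Hx)).
Qed.

Lemma chain_count s : forall I (C : nat -> A -> Prop) k, is_ideal I -> flag I s ->
  (forall i, (i <= k)%N -> is_ideal (C i)) -> subset_of I (C 0%N) ->
  (forall i, (i < k)%N -> subset_of (C i) (C i.+1)) -> (nstrict C k <= size s)%N.
Proof.
elim: s => [|g s IH] I C k HI /=.
  move=> H1 HC H0 Hmono; rewrite nstrict_full //.
  elim=> [|i IHi] Hi x; first by apply: id1; [apply: HC|apply: H0].
  by apply: (Hmono i Hi); apply: IHi; apply: ltnW.
move=> [Hs Hf] HC H0 Hmono.
pose C' i := ext (C i) g.
have HC' : forall i, (i <= k)%N -> is_ideal (C' i) by move=> i Hi; apply/ext_ideal/HC.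
have := IH (ext I g) C' k (ext_ideal g HI) Hf HC' (ext_mono (g:=g) H0)
  (fun i Hi => ext_mono (g:=g) (Hmono i Hi)).
suff : (nstrict C k + bP (C 0%N g) <= nstrict C' k + bP (C k g))%N.
  rewrite /bP; destruct (excluded_middle_informative (C 0%N g));
  destruct (excluded_middle_informative (C k g)); simpl; lia.
have Hmg : forall i, (i < k)%N -> C i g -> C i.+1 g by move=> i Hi Hg; exact: (Hmono i Hi g Hg).
elim: k HC Hmono HC' Hmg => [|k IHk] HC Hmono HC' Hmg //=.
have IH1 := IHk (fun i Hi => HC i (leq_trans Hi (leqnSn _)))
   (fun i Hi => Hmono i (leq_trans Hi (leqnSn _)))
   (fun i Hi => HC' i (leq_trans Hi (leqnSn _)))
   (fun i Hi => Hmg i (leq_trans Hi (leqnSn _))).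
move: IH1; rewrite /bP.
destruct (excluded_middle_informative (C 0%N g));
destruct (excluded_middle_informative (C k g)) as [Hk|Hk];
destruct (excluded_middle_informative (C k.+1 g)) as [Hk1|Hk1];
destruct (excluded_middle_informative (~ subset_of (C k.+1) (C k))) as [Hst|Hst];
destruct (excluded_middle_informative (~ subset_of (C' k.+1) (C' k))) as [Hst'|Hst']; simpl; try lia.
all: try (exfalso; apply: Hk1; by apply: Hmg).
all: have HH : subset_of (C' k.+1) (C' k) by apply: NNPP.
all: have HIk : subset_of I (C k) by apply: (sub_chain H0 Hmono); apply: leqnSn.
all: have [K1 K2] := key_strict HI Hs HIk (Hmono k (leqnn _)) (HC k (leqnSn _)) (HC k.+1 (leqnn _)) HH Hst.
all: done.
Qed.



Lemma nstrict_all (C : nat -> A -> Prop) k :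
  (forall i, (i < k)%N -> ~ subset_of (C i.+1) (C i)) -> nstrict C k = k.
Proof.
elim: k => [|k IH] H //=.
rewrite IH; last by move=> i Hi; apply: H; apply: ltn_trans Hi _.
rewrite /bP; destruct (excluded_middle_informative (~ subset_of (C k.+1) (C k))) as [h|h].
  by rewrite addn1.
by exfalso; apply: h; apply: H.
Qed.

Lemma chain_bound I s k : is_ideal I -> flag I s -> chain_of_length I k -> (k <= size s)%N.
Proof.
move=> HI Hf [J [HJ [H0 [Hk Hst]]]].
have E : nstrict J k = k by apply: nstrict_all => i Hi; case: (Hst i Hi).
rewrite -E.
apply: (@chain_count s I J k HI Hf) => //.
  by move=> x Hx; apply/H0.
by move=> i Hi; case: (Hst i Hi).
Qed.

Lemma ex_max (P : nat -> Prop) B : (forall k, P k -> (k <= B)%N) -> (exists k, P k) ->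
  exists n, P n /\ forall k, P k -> (k <= n)%N.
Proof.
move=> HB [k0 Hk0]; apply: NNPP => Hn.
have H : forall j, exists k, P k /\ (j <= k)%N.
  elim=> [|j [k [Hk Hjk]]]; first by exists k0.
  apply: NNPP => Hn2; apply: Hn; exists k; split => // k' Hk'.
  case: (leqP k' k) => // Hlt; exfalso; apply: Hn2; exists k'; split => //.
  by apply: leq_trans Hlt; rewrite ltnS.
have [k [Hk HBk]] := H B.+1.
by have := HB k Hk; rewrite leqNgt HBk.
Qed.

Lemma chain_exists I : is_ideal I -> exists k, chain_of_length I k.
Proof.
move=> HI; case: (classic (I 1)) => H1.
  exists 0%N, (fun _ => I); split => //; split => //; split => //.
  by move=> x; apply: id1.
exists 1%N, (fun i => if i == 0%N then I else (fun _ => True)); split.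
  move=> [|[|i]] Hi //=; by repeat split.
split => //; split => //.
case=> [|i] // _; split; first by move=> x. by move=> H; apply: H1; apply: (H 1).
Qed.

Lemma ell_spec I s : is_ideal I -> flag I s -> length_is I (ell I).
Proof.
move=> HI Hf; rewrite /ell; apply: epsilon_spec.
have [n [Hn Hmax]] := ex_max (fun k Hk => chain_bound HI Hf Hk) (chain_exists HI).
by exists n.
Qed.

Lemma ell_le I s : is_ideal I -> flag I s -> (ell I <= size s)%N.
Proof. by move=> HI Hf; have [H _] := ell_spec HI Hf; apply: chain_bound H. Qed.

Lemma ell_ge1 I s : is_ideal I -> flag I s -> ~ I 1 -> (1 <= ell I)%N.
Proof.
move=> HI Hf H1; have [_ H] := ell_spec HI Hf; apply: H.
exists (fun i => if i == 0%N then I else (fun _ => True)); split.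
  move=> [|[|i]] Hi //=; by repeat split.
split => //; split => //.
case=> [|i] // _; split; first by move=> x. by move=> H; apply: H1; apply: (H 1).
Qed.


Lemma chain_insert I k (J : nat -> A -> Prop) i K :
  (forall j, (j <= k)%N -> is_ideal (J j)) ->
  (forall x, J 0%N x <-> I x) -> (forall x, J k x) ->
  (forall j, (j < k)%N -> subset_of (J j) (J j.+1) /\ ~ subset_of (J j.+1) (J j)) ->
  (i < k)%N -> is_ideal K -> subset_of (J i) K -> subset_of K (J i.+1) ->
  ~ subset_of K (J i) -> ~ subset_of (J i.+1) K -> chain_of_length I k.+1.
Proof.
move=> HJ H0 Hk Hst Hik HK H1 H2 H3 H4.
exists (fun j => if (j <= i)%N then J j else if j == i.+1 then K else J j.-1).
split.
  move=> j Hj; case: (leqP j i) => Hji; first by apply: HJ; apply: leq_trans Hji (ltnW Hik).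
  case: eqP => _ //; apply: HJ; lia.
split; first by [].
split.
  move=> x; have -> : (k.+1 <= i)%N = false by apply/negbTE; rewrite -ltnNge; apply: ltnW.
  by have -> : (k.+1 == i.+1) = false by apply/negbTE; rewrite eqSS; lia.
move=> j Hj.
case: (ltngtP j i) => Hji.
- apply: Hst; lia.
- rewrite eqSS /=.
  case: (j =P i.+1) => Hj1.
    subst j; rewrite (_ : (i.+1 == i) = false) /=; last by apply/negbTE; lia.
    by split.
  have -> : (j == i) = false by apply/negbTE; lia.
  have E : j = j.-1.+1 by lia.
  have HH := Hst j.-1 ltac:(lia); rewrite -E in HH; exact: HH.
- subst j; rewrite eqxx; split => //.
Qed.

Hypothesis Hm : is_ideal (@max_ideal A).
Hypothesis Hu : forall a : A, max_ideal a -> (1 - a) \is a GRing.unit.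

Lemma length_flag I l : is_ideal I -> length_is I l -> exists s, flag I s /\ size s = l.
Proof.
move=> HI [[J [HJ [H0 [Hk Hst]]]] Hmax].
pose g i := epsilon (inhabits (0 : A)) (fun y => J i.+1 y /\ ~ J i y).
have Hg : forall i, (i < l)%N -> J i.+1 (g i) /\ ~ J i (g i).
  move=> i Hi; rewrite /g; apply: (epsilon_spec (inhabits (0:A)) (fun y => J i.+1 y /\ ~ J i y)); have [_ Hn] := Hst i Hi.
  apply: NNPP => Hn2; apply: Hn => x Hx; apply: NNPP => Hx2; apply: Hn2; exists x; tauto.
have Hins : forall i K, (i < l)%N -> is_ideal K -> subset_of (J i) K -> subset_of K (J i.+1) ->
    ~ subset_of K (J i) -> ~ subset_of (J i.+1) K -> False.
  move=> i K Hi HK a b c d; have := Hmax _ (chain_insert HJ H0 Hk Hst Hi HK a b c d).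
  by rewrite ltnn.
have Hext : forall i, (i < l)%N -> forall x, J i.+1 x <-> ext (J i) (g i) x.
  move=> i Hi x; split; last first.
    apply: ext_min; [apply: HJ|apply: (proj1 (Hst i Hi))|apply: (proj1 (Hg i Hi))] => //.
  move: x; apply: NNPP => Hn.
  apply: (Hins i (ext (J i) (g i)) Hi (ext_ideal _ (HJ i (ltnW Hi)))).
  - by apply: ext_sub; apply: HJ; apply: ltnW.
  - apply: ext_min; [apply: HJ|apply: (proj1 (Hst i Hi))|apply: (proj1 (Hg i Hi))] => //.
  - by move=> H; apply: (proj2 (Hg i Hi)); apply: H; apply: ext_g; apply: HJ; apply: ltnW.
  - done.
have Hstep : forall i, (i < l)%N -> step (J i) (g i).
  move=> i Hi a Ha; apply: NNPP => Hn.
  have HJi := HJ i (ltnW Hi).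
  apply: (Hins i (ext (J i) (a * g i)) Hi (ext_ideal _ HJi)).
  - by apply: ext_sub.
  - apply: ext_min; [apply: HJ|apply: (proj1 (Hst i Hi))|] => //.
    by apply: idMl; [apply: HJ|apply: (proj1 (Hg i Hi))].
  - by move=> H; apply: Hn; apply: H; apply: ext_g.
  - move=> H; have [b Hb] := H _ (proj1 (Hg i Hi)).
    have Hba : @max_ideal A (b * a) by exact: (@idMl (@max_ideal A) b a Hm Ha).
    have := Hu Hba => Hunit.
    apply: (proj2 (Hg i Hi)).
    have -> : g i = (1 - b * a)^-1 * (g i - b * (a * g i)).
      by rewrite mulrA -[X in _ * (X - _)]mul1r -mulrBl mulKr.
    by apply: idMl.
exists (map g (iota 0 l)); rewrite size_map size_iota; split => //.
have : forall d i (E : A -> Prop), (i + d)%N = l -> (forall x, E x <-> J i x) -> flag E (map g (iota i d)).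
  elim=> [|d IH] i E Hid HE /=.
    by apply/HE; rewrite addn0 in Hid; subst i; apply: Hk.
  have Hi : (i < l)%N by lia.
  split.
    by move=> a Ha; apply/HE; apply: Hstep.
  apply: (IH i.+1); first by lia.
  move=> x; rewrite Hext //; split => -[a Ha]; exists a; apply/HE => //.
move=> H; apply: H => // x; split => ?; by apply/H0.
Qed.

End Ring.

Section Ring2.
Variable A : comUnitRingType.
Local Open Scope ring_scope.
Implicit Types (I J X : A -> Prop).

Lemma steps_mul (c : A) hs : forall I0 I, is_ideal I0 -> is_ideal I ->
  (forall x, I0 x -> I (x * c)) -> steps I0 hs ->
  steps I (map (fun h => h * c) hs) /\
  (forall x, extS I0 hs x -> extS I (map (fun h => h * c) hs) (x * c)).
Proof.
elim: hs => [|h hs IH] I0 I H0 HI Hinv //=.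
move=> [Hs Hss].
have Hinv' : forall x, ext I0 h x -> ext I (h * c) (x * c).
  move=> x [a Ha]; exists a; rewrite mulrA -mulrBl; exact: Hinv.
have [IH1 IH2] := IH _ _ (ext_ideal h H0) (ext_ideal (h * c) HI) Hinv' Hss.
split => //; split => //.
by move=> a Ha; rewrite mulrA; apply: Hinv; apply: Hs.
Qed.

Lemma colon_ideal I x : is_ideal I -> is_ideal (fun y => I (y * x)).
Proof.
move=> HI; split; first by rewrite mul0r; apply: id0.
split; first by move=> y z Hy Hz; rewrite mulrBl; apply: idB.
by move=> a y Hy; rewrite -mulrA; apply: idMl.
Qed.

Lemma flag_colon I x t s : is_ideal I -> flag (fun y => I (y * x)) t -> flag (ext I x) s ->
  flag I (map (fun h => h * x) t ++ s).
Proof.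
move=> HI Ht Hs; apply/flag_cat.
have [Ht1 Ht2] := proj1 (flag_steps _ _) Ht.
have [S1 S2] := steps_mul (colon_ideal x HI) HI (fun y Hy => Hy) Ht1.
split => //; apply: flag_mono Hs.
apply: ext_min; [exact: extS_ideal|exact: extS_sub|].
by have := S2 _ Ht2; rewrite mul1r.
Qed.

Variable f : A -> A.
Hypothesis fM : forall x y, f (x * y) = f x * f y.
Hypothesis fB : forall x y, f (x - y) = f x - f y.
Hypothesis f1 : f 1 = 1.

Definition Gf X := gen_ideal (image_of f X).

Lemma flag_image J gs hs : is_ideal J -> flag J gs -> flag (Gf (@max_ideal A)) hs ->
  flag (Gf J) (flatten (map (fun g => map (fun h => h * f g) hs) gs)).
Proof.
move=> HJ Hgs Hhs; elim: gs J HJ Hgs => [|g gs IH] J HJ /=.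
  by move=> H1; apply: gen_sub; exists 1; rewrite f1.
move=> [Hs Hf]; apply/flag_cat.
have [Ht1 Ht2] := proj1 (flag_steps _ _) Hhs.
have Hinv : forall x, Gf (@max_ideal A) x -> Gf J (x * f g).
  apply: (gen_min (colon_ideal (f g) (gen_is_ideal _))).
  by move=> y [x [Hx ->]]; rewrite -fM; apply: gen_sub; exists (x * g); split => //; apply: Hs.
have [S1 S2] := steps_mul (gen_is_ideal _) (gen_is_ideal _) Hinv Ht1.
split => //; apply: flag_mono (IH _ (ext_ideal g HJ) Hf).
apply: gen_min; first exact: (extS_ideal _ (gen_is_ideal _)).
move=> y [x [[a Ha] ->]].
have -> : f x = f (x - a * g) + f a * f g by rewrite fB fM subrK.
have He := extS_ideal (map (fun h => h * f g) hs) (gen_is_ideal (image_of f J)).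
apply: idD => //.
  by apply: extS_sub; [exact: gen_is_ideal|apply: gen_sub; exists (x - a * g)].
by apply: idMl => //; have := S2 _ Ht2; rewrite mul1r.
Qed.

Lemma Gf_gen X : subset_of (Gf (gen_ideal X)) (Gf X).
Proof.
apply: gen_min; first exact: gen_is_ideal.
have HT : is_ideal (fun x => Gf X (f x)).
  have f0 : f 0 = 0 by have := fB 1 1; rewrite !subrr.
  split; first by rewrite f0; exact: (id0 (gen_is_ideal _)).
  split; first by move=> x y Hx Hy; rewrite fB; exact: (idB (gen_is_ideal _) Hx Hy).
  by move=> a x Hx; rewrite fM; exact: (idMl (f a) (gen_is_ideal _) Hx).
move=> y [x [Hx ->]]; apply: (gen_min HT) Hx.
by move=> z Hz; apply: gen_sub; exists z.
Qed.

End Ring2.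

Section Ring3.
Variable A : comUnitRingType.
Local Open Scope ring_scope.
Implicit Types (I J X : A -> Prop).

Lemma sum_upd n (e : nat -> nat) i v : (i < n)%N ->
  (\sum_(j < n) (if (j : nat) == i then v else e j) + e i = \sum_(j < n) e j + v)%N.
Proof.
move=> Hi.
rewrite (bigD1 (Ordinal Hi)) //= [X in (_ = X + _)%N](bigD1 (Ordinal Hi)) //= eqxx.
have -> : (\sum_(j < n | j != Ordinal Hi) (if (j : nat) == i then v else e j) =
          \sum_(j < n | j != Ordinal Hi) e j)%N.
  by apply: eq_bigr => j Hj; rewrite ifN //; apply: contra Hj => /eqP Hj; apply/eqP/val_inj.
rewrite [RHS]addnC addnA [X in (X + _)%N = _]addnC. by rewrite -addnA addnC.
Qed.

Lemma le_sum n (e : nat -> nat) i : (i < n)%N -> (e i <= \sum_(j < n) e j)%N.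
Proof. by move=> Hi; rewrite (bigD1 (Ordinal Hi)) //= leq_addr. Qed.

Lemma flag_primary (xs : seq A)
  (Hgen : subset_of (@max_ideal A) (gen_ideal (fun y => y \in xs))) :
  forall d I (e : nat -> nat), is_ideal I -> (\sum_(i < size xs) e i <= d)%N ->
  (forall i, (i < size xs)%N -> I (nth 0 xs i ^+ e i)) -> exists s, flag I s.
Proof.
have Hbase : forall I, is_ideal I -> (forall i, (i < size xs)%N -> I (nth 0 xs i)) ->
    exists s, flag I s.
  move=> I HI H; exists [:: 1]; split; last by apply: ext_g.
  move=> a Ha; rewrite mulr1; apply: (gen_min HI) (Hgen _ Ha) => y Hy.
  by rewrite -(nth_index 0 Hy); apply: H; rewrite index_mem.
elim=> [|d IH] I e HI Hs He;
  case: (classic (exists i, (i < size xs)%N /\ (1 < e i)%N)) => [[i [Hi He2]]|Hno].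
- by have := le_sum e Hi; lia.
- apply: Hbase => // i Hi; have := He i Hi.
  have : (e i <= 1)%N by apply: NNPP => H; apply: Hno; exists i; split => //; lia.
  case: (e i) => [|[|k]] Hk; rewrite ?expr0 ?expr1 //.
  by move=> H1; apply: id1.
- pose x := nth 0 xs i.
  pose e1 := fun j : nat => if j == i then (e i).-1 else e j.
  pose e2 := fun j : nat => if j == i then 1%N else e j.
  have S1 := sum_upd e (e i).-1 Hi. have S2 := sum_upd e 1%N Hi.
  have He1' : forall j, (j < size xs)%N -> I (nth 0 xs j ^+ e1 j * x).
    move=> j Hj; rewrite /e1; case: eqP => [->|_].
      by rewrite -exprSr prednK; [exact: He | lia].
    by apply: idMr => //; apply: He.
  have He2' : forall j, (j < size xs)%N -> ext I x (nth 0 xs j ^+ e2 j).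
    move=> j Hj; rewrite /e2; case: eqP => [->|_]; first by rewrite expr1; apply: ext_g.
    by apply: ext_sub => //; apply: He.
  have Hs1 : (\sum_(j < size xs) e1 j <= d)%N by rewrite /e1; lia.
  have Hs2 : (\sum_(j < size xs) e2 j <= d)%N by rewrite /e2; lia.
  have [t Ht] := IH (fun y => I (y * x)) e1 (colon_ideal x HI) Hs1 He1'.
  have [s Hs'] := IH (ext I x) e2 (ext_ideal x HI) Hs2 He2'.
  by exists (map (fun h => h * x) t ++ s); apply: flag_colon.
- apply: Hbase => // i Hi; have := He i Hi.
  have : (e i <= 1)%N by apply: NNPP => H; apply: Hno; exists i; split => //; lia.
  case: (e i) => [|[|k]] Hk; rewrite ?expr0 ?expr1 //.
  by move=> H1; apply: id1.
Qed.

Hypothesis HN : is_noetherian A.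

Lemma noeth_fg I : is_ideal I ->
  exists xs : seq A, (forall x, x \in xs -> I x) /\ subset_of I (gen_ideal (fun y => y \in xs)).
Proof.
move=> HI; apply: NNPP => Hn.
have Hex : forall xs : seq A, (forall x, x \in xs -> I x) ->
    exists y, I y /\ ~ gen_ideal (fun z => z \in xs) y.
  move=> xs Hxs; apply: NNPP => H; apply: Hn; exists xs; split => // y Hy.
  by apply: NNPP => H2; apply: H; exists y.
pose nxt (xs : seq A) := epsilon (inhabits (0 : A)) (fun y => I y /\ ~ gen_ideal (fun z => z \in xs) y) :: xs.
pose sq n := iter n nxt [::].
have Hsq : forall n, forall x, x \in sq n -> I x.
  elim=> [|n IHn] x //=; rewrite inE => /orP [/eqP ->|]; last by apply: IHn.
  by have [H _] := epsilon_spec (inhabits (0 : A)) _ (Hex _ IHn).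
have Hmono : forall n, subset_of (gen_ideal (fun z => z \in sq n)) (gen_ideal (fun z => z \in sq n.+1)).
  move=> n; apply: gen_min; first exact: gen_is_ideal.
  by move=> y Hy; apply: gen_sub; rewrite /= inE Hy orbT.
have [N HNN] := @HN (fun n => gen_ideal (fun z => z \in sq n)) (fun n => @gen_is_ideal _ _) Hmono.
have := HNN N.+1 (leqnSn _).
have [_ H2] := epsilon_spec (inhabits (0 : A)) _ (Hex _ (Hsq N)).
move=> H; apply: H2; apply: H; apply: gen_sub; rewrite /= inE eqxx //.
Qed.

Lemma noeth_max I : is_ideal I -> ~ I 1 -> exists M, is_maximal_ideal M /\ subset_of I M.
Proof.
move=> HI H1; apply: NNPP => Hn.
pose P (J J' : A -> Prop) := is_ideal J' /\ ~ J' 1 /\ subset_of J J' /\ ~ subset_of J' J.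
have Hex : forall J, is_ideal J -> ~ J 1 -> subset_of I J -> exists J', P J J'.
  move=> J HJ HJ1 HIJ; apply: NNPP => H; apply: Hn; exists J; split => //.
  split => //; split => // J' HJ' HJJ'.
  case: (classic (J' 1)) => ?; [by right|left].
  by apply: NNPP => H2; apply: H; exists J'.
pose nxt J := epsilon (inhabits (fun _ : A => False)) (P J).
pose C n := iter n nxt I.
have HC : forall n, is_ideal (C n) /\ ~ C n 1 /\ subset_of I (C n).
  elim=> [|n [Ha [Hb Hc]]] /=.
    by split => //; split => // x.
  have [Hd [He [Hf _]]] := epsilon_spec (inhabits (fun _ : A => False)) (P _) (Hex _ Ha Hb Hc).
  by split => //; split => // x Hx; apply: Hf; apply: Hc.
have Hmono : forall n, subset_of (C n) (C n.+1).
  move=> n; have [Ha [Hb Hc]] := HC n.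
  by have [_ [_ [Hd _]]] := epsilon_spec (inhabits (fun _ : A => False)) (P _) (Hex _ Ha Hb Hc).
have [N HNN] := @HN C (fun n => proj1 (HC n)) Hmono.
have [Ha [Hb Hc]] := HC N.
have [_ [_ [_ Hd]]] := epsilon_spec (inhabits (fun _ : A => False)) (P _) (Hex _ Ha Hb Hc).
by apply: Hd; apply: (HNN N.+1 (leqnSn _)).
Qed.

Hypothesis HL : is_local A.

Lemma local_facts : is_ideal (@max_ideal A) /\
  (forall a : A, max_ideal a -> (1 - a) \is a GRing.unit).
Proof.
have [M0 [[HM0 [HM01 _]] Huniq]] := HL.
have Heq : forall x, @max_ideal A x <-> M0 x.
  move=> x; split => Hx.
    pose P := fun y : A => exists a, y = a * x.
    have HP : is_ideal P.
      split; first by exists 0; rewrite mul0r.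
      split; first by move=> y z [a ->] [b ->]; exists (a - b); rewrite mulrBl.
      by move=> c y [a ->]; exists (c * a); rewrite mulrA.
    have HP1 : ~ P 1.
      move=> [a Ha]; apply: Hx; apply/unitrPr; exists a; by rewrite mulrC.
    have [M' [HM' HPM']] := noeth_max HP HP1.
    have [_ H2] := Huniq M' HM'.
    by apply: H2; apply: HPM'; exists 1; rewrite mul1r.
  move=> Hu; apply: HM01; rewrite -(mulVr Hu); apply: idMl => //.
split.
  split; first by apply/Heq; apply: id0.
  split; first by move=> x y /Heq Hx /Heq Hy; apply/Heq; apply: idB.
  by move=> a x /Heq Hx; apply/Heq; apply: idMl.
move=> a /Heq Ha; apply: NNPP => Hn; apply: HM01.
have -> : (1 : A) = (1 - a) + a by rewrite subrK.
apply: idD => //; apply/Heq; exact: Hn.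
Qed.

End Ring3.

Section Iter.
Local Open Scope ring_scope.
Variable R : comUnitRingType.
Variable f : {rmorphism R -> R}.
Lemma iterM k x y : iter k f (x * y) = iter k f x * iter k f y.
Proof. by elim: k => //= k ->; rewrite rmorphM. Qed.
Lemma iterB k x y : iter k f (x - y) = iter k f x - iter k f y.
Proof. by elim: k => //= k ->; rewrite rmorphB. Qed.
Lemma iter1 k : iter k f 1 = 1.
Proof. by elim: k => //= k ->; rewrite rmorph1. Qed.
Lemma iter0 k : iter k f 0 = 0.
Proof. by elim: k => //= k ->; rewrite rmorph0. Qed.
Lemma iterU k x : x \is a GRing.unit -> iter k f x \is a GRing.unit.
Proof. by move=> Hx; elim: k => //= k IH; apply: rmorph_unit. Qed.
End Iter.

Lemma size_flat_map (T : Type) (F : T -> T -> T) (gs hs : seq T) :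
  size (flatten (map (fun g => map (F g) hs) gs)) = (size gs * size hs)%N.
Proof. by elim: gs => //= g gs IH; rewrite size_cat size_map IH mulSn. Qed.

Section Transfer.
Local Open Scope ring_scope.
Variables A S : comUnitRingType.
Variable pi : {rmorphism A -> S}.
Hypothesis Hsurj : forall s : S, exists x : A, pi x = s.

Definition pre (t : S) : A := epsilon (inhabits 0) (fun x => pi x = t).
Lemma pre_spec t : pi (pre t) = t.
Proof. exact: (epsilon_spec (inhabits 0) (fun x => pi x = t) (Hsurj t)). Qed.

Lemma flag_map s : forall (IA : A -> Prop) (IS : S -> Prop),
  (forall x, IA x -> IS (pi x)) -> flag IA s -> flag IS (map pi s).
Proof.
elim: s => [|g s IH] IA IS H /=; first by move=> H1; rewrite -(rmorph1 pi); apply: H.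
move=> [Hs Hf]; split.
  move=> a Ha; have [x Hx] := Hsurj a; subst a.
  have Hx : max_ideal x by move=> Hu; apply: Ha; apply: rmorph_unit.
  by rewrite -rmorphM; apply: H; apply: Hs.
apply: IH Hf => x [a Ha]; exists (pi a); rewrite -rmorphM -rmorphB; exact: H.
Qed.

Hypothesis Hmx : forall x : A, max_ideal x -> max_ideal (pi x).

Lemma flag_pre s : forall (IA : A -> Prop) (IS : S -> Prop),
  (forall x, IS (pi x) -> IA x) -> flag IS s -> flag IA (map pre s).
Proof.
elim: s => [|g s IH] IA IS H /=; first by move=> H1; apply: H; rewrite rmorph1.
move=> [Hs Hf]; split.
  by move=> a Ha; apply: H; rewrite rmorphM pre_spec; apply: Hs; apply: Hmx.
apply: IH Hf => x [b Hb]; have [c Hc] := Hsurj b; subst b.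
by exists c; apply: H; rewrite rmorphB rmorphM pre_spec.
Qed.

End Transfer.

Section Main.
Local Open Scope ring_scope.
Variable A : comUnitRingType.
Variable phi : {rmorphism A -> A}.
Hypothesis HN : is_noetherian A.
Hypothesis HL : is_local A.
Hypothesis Hphi : finite_length_selfmap phi.

Let Hm := (local_facts HN HL).1.
Let Hu := (local_facts HN HL).2.

Definition G k := gen_ideal (image_of (iter k phi) (@max_ideal A)).

Lemma iter_max k x : max_ideal x -> max_ideal (iter k phi x).
Proof. by move=> Hx; elim: k => //= k IH; apply: (Hphi.1); exists (iter k phi x). Qed.

Lemma G_ideal k : is_ideal (G k).
Proof. exact: gen_is_ideal. Qed.

Lemma G_sub_max k : subset_of (G k) (@max_ideal A).
Proof. by apply: gen_min Hm _ => y [x [Hx ->]]; apply: iter_max. Qed.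

Lemma G_proper k : ~ G k 1.
Proof. by move=> H; apply: (G_sub_max H); apply: unitr1. Qed.

Lemma Q_flag : exists s, flag (Gf phi (@max_ideal A)) s.
Proof.
have [HQ [_ [_ Hrad]]] := Hphi.2.
have [xs [Hxs Hgen]] := noeth_fg HN Hm.
pose e i := epsilon (inhabits 0%N) (fun k => Gf phi (@max_ideal A) (nth 0 xs i ^+ k)).
apply: (@flag_primary A xs Hgen (\sum_(i < size xs) e i)%N _ e HQ (leqnn _)).
move=> i Hi; rewrite /e.
apply: (epsilon_spec (inhabits 0%N) (fun k => Gf phi (@max_ideal A) (nth 0 xs i ^+ k))).
by apply/(Hrad _); apply: Hxs; apply: mem_nth.
Qed.

Lemma G_flag k : exists s, flag (G k) s.
Proof.
elim: k => [|k [gs Hgs]].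
  exists [:: 1]; split; last by apply: ext_g; apply: G_ideal.
  by move=> a Ha; rewrite mulr1; apply: gen_sub; exists a.
have [hs Hhs] := Q_flag.
have H := flag_image (f:=phi) (rmorphM phi) (rmorphB phi) (rmorph1 phi) (G_ideal k) Hgs Hhs.
eexists; apply: flag_mono H => x Hx.
have := Gf_gen (f:=phi) (rmorphM phi) (rmorphB phi) Hx.
apply: gen_min; first exact: G_ideal.
by move=> y [z [[w [Hw ->]] ->]]; apply: gen_sub; exists w.
Qed.


Lemma part_a n (S : comUnitRingType) (pi : {rmorphism A -> S}) (psi : {rmorphism S -> S}) :
  (forall s : S, exists x : A, pi x = s) ->
  (forall x : A, pi x = 0 <-> iter n phi x = 0) ->
  (forall x : A, psi (pi x) = pi (phi x)) ->
  h_alg phi = h_alg psi.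
Proof.
move=> Hsurj Hker Hcomm.
have Hpk : forall x, pi x = 0 -> max_ideal x.
  move=> x /Hker H0 Hx; have := iterU phi n Hx; rewrite H0 unitr0 //.
have Hmx : forall x, max_ideal x -> max_ideal (pi x).
  move=> x Hx /unitrPr [t Ht]; have [y Hy] := Hsurj t; subst t.
  have H1 : max_ideal (x * y - 1) by apply: Hpk; rewrite rmorphB rmorphM rmorph1 Ht subrr.
  have H2 : max_ideal (x * y) by apply: (idMr _ Hm).
  have H3 : @max_ideal A 1.
    have -> : (1 : A) = x * y - (x * y - 1) by rewrite opprB addrC subrK.
    exact: (idB Hm).
  by apply: H3; exact: unitr1.
have Hmx' : forall x, max_ideal (pi x) -> max_ideal x.
  by move=> x Hx Hu'; apply: Hx; apply: rmorph_unit.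
have HmS : is_ideal (@max_ideal S).
  split; first by rewrite /max_ideal unitr0.
  split.
    move=> s t Hs Ht; have [x Hx] := Hsurj s; have [y Hy] := Hsurj t; subst s t.
    by rewrite -rmorphB; apply: Hmx; apply: (idB Hm); apply: Hmx'.
  move=> c s Hs; have [x Hx] := Hsurj s; have [y Hy] := Hsurj c; subst s c.
  by rewrite -rmorphM; apply: Hmx; apply: (idMl _ Hm); apply: Hmx'.
have HuS : forall a : S, max_ideal a -> (1 - a) \is a GRing.unit.
  move=> a Ha; have [x Hx] := Hsurj a; subst a.
  by rewrite -(rmorph1 pi) -rmorphB; apply: rmorph_unit; apply: Hu; apply: Hmx'.
have Hci : forall k x, pi (iter k phi x) = iter k psi (pi x).
  by move=> k x; elim: k => //= k IH; rewrite -Hcomm IH.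
pose GS k := gen_ideal (image_of (iter k psi) (@max_ideal S)).
have GS_ideal : forall k, is_ideal (GS k) by move=> k; exact: gen_is_ideal.
have GS_proper : forall k, ~ GS k 1.
  move=> k H; have : subset_of (GS k) (@max_ideal S).
    apply: gen_min HmS _ => y [s [Hs ->]]; have [x Hx] := Hsurj s; subst s.
    by rewrite -Hci; apply: Hmx; apply: iter_max; apply: Hmx'.
  by move=> Hsub; apply: (Hsub _ H); apply: unitr1.
have F2 : forall k, exists s, flag (GS k) s /\ size s = ell (G k).
  move=> k; have [s0 Hs0] := G_flag k.
  have [sA [HsA HszA]] := length_flag Hm Hu (G_ideal k) (ell_spec (G_ideal k) Hs0).
  exists (map pi sA); rewrite size_map; split => //.
  apply: (flag_map Hsurj) HsA => x Hx.
  have HT : is_ideal (fun y => GS k (pi y)).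
    split; first by rewrite rmorph0; apply: (id0 (GS_ideal k)).
    split; first by move=> y z Hy Hz; rewrite rmorphB; apply: (idB (GS_ideal k)).
    by move=> a y Hy; rewrite rmorphM; apply: (idMl _ (GS_ideal k)).
  apply: (gen_min HT) Hx => y [z [Hz ->]].
  by rewrite Hci; apply: gen_sub; exists (pi z); split => //; apply: Hmx.
have Hba : forall k, (ell (GS k) <= ell (G k))%N.
  by move=> k; have [s [Hs <-]] := F2 k; apply: ell_le.
have F3 : forall k, (ell (G (n + k)) <= ell (G n) * ell (GS k))%N.
  move=> k; have [s0 [Hs0 _]] := F2 k.
  have [sS [HsS HszS]] := length_flag HmS HuS (GS_ideal k) (ell_spec (GS_ideal k) Hs0).
  pose T x := G (n + k) (iter n phi x).
  have HT : is_ideal T.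
    split; first by rewrite /T iter0; apply: (id0 (G_ideal _)).
    split; first by move=> y z Hy Hz; rewrite /T iterB; exact: (idB (G_ideal _) Hy Hz).
    by move=> a y Hy; rewrite /T iterM; exact: (idMl _ (G_ideal _) Hy).
  pose U (s : S) := forall x, pi x = s -> T x.
  have HU : is_ideal U.
    split; first by move=> x /Hker Hx; rewrite /T Hx; apply: (id0 (G_ideal _)).
    split.
      move=> s t Hs Ht x Hx; have [x1 Hx1] := Hsurj s; have [x2 Hx2] := Hsurj t.
      have H0 : iter n phi (x - (x1 - x2)) = 0 by apply/Hker; rewrite !rmorphB Hx Hx1 Hx2 subrr.
      have -> : x = (x - (x1 - x2)) + (x1 - x2) by rewrite subrK.
      apply: (idD HT); first by rewrite /T H0; apply: (id0 (G_ideal _)).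
      by apply: (idB HT); [apply: Hs|apply: Ht].
    move=> c s Hs x Hx; have [c' Hc'] := Hsurj c; have [y Hy] := Hsurj s.
    have H0 : iter n phi (x - c' * y) = 0 by apply/Hker; rewrite rmorphB rmorphM Hx Hc' Hy subrr.
    have -> : x = (x - c' * y) + c' * y by rewrite subrK.
    apply: (idD HT); first by rewrite /T H0; apply: (id0 (G_ideal _)).
    by apply: (idMl _ HT); apply: Hs.
  have HGU : forall x, GS k (pi x) -> T x.
    have HsubU : subset_of (image_of (iter k psi) (@max_ideal S)) U; last first.
      by move=> x Hx; exact: (gen_min HU HsubU Hx x erefl).
    move=> s' [s [Hs ->]] y Hy; have [z Hz] := Hsurj s; subst s.
    have H0 : iter n phi (y - iter k phi z) = 0 by apply/Hker; rewrite rmorphB Hy Hci subrr.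
    have -> : y = (y - iter k phi z) + iter k phi z by rewrite subrK.
    apply: (idD HT); first by rewrite /T H0; apply: (id0 (G_ideal _)).
    by rewrite /T -iterD; apply: gen_sub; exists z; split => //; apply: Hmx'.
  have HA := flag_pre Hsurj Hmx HGU HsS.
  have [s1 Hs1] := G_flag n.
  have [hs [Hhs Hszh]] := length_flag Hm Hu (G_ideal n) (ell_spec (G_ideal n) Hs1).
  have H := flag_image (f:=iter n phi) (@iterM _ phi n) (@iterB _ phi n) (iter1 phi n) HT HA Hhs.
  have H' : flag (G (n + k)) (flatten (map (fun g => map (fun h => h * iter n phi g) hs) (map (pre pi) sS))).
    apply: flag_mono H; apply: gen_min; first exact: G_ideal.
    by move=> y [x [Hx ->]].
  have := ell_le (G_ideal _) H'; rewrite size_flat_map size_map HszS Hszh mulnC //.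
have Hb1 : forall k, (1 <= ell (GS k))%N.
  by move=> k; have [s0 [Hs0 _]] := F2 k; exact: (ell_ge1 (GS_ideal k) Hs0 (GS_proper k)).
have Ha1 : forall k, (1 <= ell (G k))%N.
  by move=> k; have [s0 Hs0] := G_flag k; exact: (ell_ge1 (G_ideal k) Hs0 (@G_proper k)).
rewrite /h_alg; congr (epsilon _ _); apply: functional_extensionality => h.
apply: propositional_extensionality.
apply: (real_fin (fun k => ell (G k)) (fun k => ell (GS k)) n).
- by move=> k; apply/leP.
- by move=> k; apply/leP.
- by move=> k; apply/leP.
- by apply/leP.
Qed.


Lemma part_b : exists N : nat, forall n : nat, (N <= n)%N ->
     forall (S : comUnitRingType) (pi : {rmorphism A -> S}) (psi : {rmorphism S -> S}),
       (forall s : S, exists x : A, pi x = s) ->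
       (forall x : A, pi x = 0%R <-> iter n phi x = 0%R) ->
       (forall x : A, psi (pi x) = pi (phi x)) ->
       injective psi.
Proof.
pose K m := fun x => iter m phi x = 0.
have HK : forall m, is_ideal (K m).
  move=> m; split; first by rewrite /K iter0.
  split; first by move=> x y Hx Hy; rewrite /K iterB Hx Hy subrr.
  by move=> a x Hx; rewrite /K iterM Hx mulr0.
have HKm : forall m, subset_of (K m) (K m.+1) by move=> m x Hx; rewrite /K /= Hx rmorph0.
have [N HNN] := @HN K HK HKm.
exists N => n Hn S pi psi Hsurj Hker Hcomm s t E.
have [x Hx] := Hsurj s; have [y Hy] := Hsurj t; subst s t.
rewrite !Hcomm in E.
apply/eqP; rewrite -subr_eq0 -rmorphB; apply/eqP/Hker.
have H1 : K n.+1 (x - y).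
  rewrite /K iterSr; apply/Hker; by rewrite rmorphB rmorphB E subrr.
have H2 := HNN n.+1 (leqW Hn) _ H1.
by rewrite -(subnK Hn) iterD H2 iter0.
Qed.

Lemma part_c : integral_selfmap phi ->
   forall n : nat, (1 <= n)%N ->
     forall (S : comUnitRingType) (pi : {rmorphism A -> S}) (psi : {rmorphism S -> S}),
       (forall s : S, exists x : A, pi x = s) ->
       (forall x : A, pi x = 0%R <-> iter n phi x = 0%R) ->
       (forall x : A, psi (pi x) = pi (phi x)) ->
       integral_selfmap psi.
Proof.
move=> Hint n _ S pi psi Hsurj Hker Hcomm s.
have [x <-] := Hsurj s; have [q [Hq Hr]] := Hint x.
exists (map_poly pi q); split; first exact: monic_map.
have E : map_poly psi (map_poly pi q) = map_poly pi (map_poly phi q).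
  by rewrite -!map_poly_comp; apply: eq_map_poly => z /=; rewrite Hcomm.
by rewrite /root E horner_map (eqP Hr) rmorph0 eqxx.
Qed.

End Main.

Theorem mainTheorem16 (A : comUnitRingType) (phi : {rmorphism A -> A})
  (HnoethA : is_noetherian A) (HlocA : is_local A)
  (Hphi : finite_length_selfmap phi) :
  (* phi(ker phi^n) is contained in ker phi^n *)
  (forall n : nat, (1 <= n)%N ->
     forall x : A, iter n phi x = 0%R -> iter n phi (phi x) = 0%R) /\
  (* (a) entropy is preserved on passing to A / ker phi^n *)
  (forall n : nat, (1 <= n)%N ->
     forall (S : comUnitRingType) (pi : {rmorphism A -> S}) (psi : {rmorphism S -> S}),
       (forall s : S, exists x : A, pi x = s) ->
       (forall x : A, pi x = 0%R <-> iter n phi x = 0%R) ->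
       (forall x : A, psi (pi x) = pi (phi x)) ->
       h_alg phi = h_alg psi) /\
  (* (b) the induced map is injective for all large n *)
  (exists N : nat, forall n : nat, (N <= n)%N ->
     forall (S : comUnitRingType) (pi : {rmorphism A -> S}) (psi : {rmorphism S -> S}),
       (forall s : S, exists x : A, pi x = s) ->
       (forall x : A, pi x = 0%R <-> iter n phi x = 0%R) ->
       (forall x : A, psi (pi x) = pi (phi x)) ->
       injective psi) /\
  (* (c) integrality passes to the induced map *)
  (integral_selfmap phi ->
   forall n : nat, (1 <= n)%N ->
     forall (S : comUnitRingType) (pi : {rmorphism A -> S}) (psi : {rmorphism S -> S}),
       (forall s : S, exists x : A, pi x = s) ->
       (forall x : A, pi x = 0%R <-> iter n phi x = 0%R) ->
       (forall x : A, psi (pi x) = pi (phi x)) ->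
       integral_selfmap psi).
Proof.
split; first by move=> n _ x H; rewrite -iterSr /= H rmorph0.
split; first by move=> n _ S pi psi; apply: part_a.
split; first exact: part_b.
exact: part_c.
Qed.
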